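(* Let $p\ge0$, $m\ge1$ be integers and, for $j\ge p$, let $\omega_j=\omega_j^{p,m}=\frac{\sqrt{j!\,(j+m)!}}{(j-p)!}$. Let $\breve{\mathbb{H}}$ be the backward weighted shift on $\mathbb{B}_p$ defined by $\breve{\mathbb{H}}e_p=0$ and $\breve{\mathbb{H}}e_k=\omega_{k-1}e_{k-1}$ for $k>p$, i.e. $$\breve{\mathbb{H}}\Big(\sum_{k\ge p}a_ke_k\Big)=\sum_{k\ge p}\omega_k a_{k+1}e_k,$$ with maximal domain $D(\breve{\mathbb{H}})=\{\phi\in\mathbb{B}_p:\breve{\mathbb{H}}\phi\in\mathbb{B}_p\}$. (Equivalently $\breve{\mathbb{H}}=a^{*p}a^{p+m}\mathbb{U}$ restricted to $\mathbb{B}_p$, where $\mathbb{U}e_k=e_{k+m-1}$.) Then $\breve{\mathbb{H}}$ is chaotic on $\mathbb{B}_p$.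
   Context: The Bargmann space $\mathbb{B}$ is the Hilbert space of entire functions with $\|\phi\|^2=\int_{\mathbb{C}}|\phi(z)|^2e^{-|z|^2}dx\,dy<\infty$; $e_k(z)=z^k/\sqrt{k!}$ is an orthonormal basis; $a\phi=\phi'$, $a^*\phi=z\phi$. $\mathbb{B}_p$ is the closed subspace spanned by $\{e_k:k\ge p\}$. Definition (Devaney): a densely defined linear operator $T$ on a Banach space $X$ is chaotic if (1) $T^n$ is closed for every positive integer $n$; (2) there is $\phi\in\bigcap_{n\ge1}D(T^n)$ whose orbit $\{\phi,T\phi,T^2\phi,\dots\}$ is dense in $X$; (3) the set of periodic points $\{\phi\in X:\exists j\in\mathbb{N},\ T^j\phi=\phi\}$ is dense in $X$. *)

(* Defs.v *)
From Stdlib Require Import Reals Lra Lia Arith Factorial.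
Open Scope R_scope.

Definition Cx := (R * R)%type.
Definition Csub (u v : Cx) : Cx := (fst u - fst v, snd u - snd v).
Definition Cscal (r : R) (u : Cx) : Cx := (r * fst u, r * snd u).
Definition Cnorm2 (u : Cx) : R := fst u ^ 2 + snd u ^ 2.
Definition C0 : Cx := (0, 0).

(* An element of the Bargmann space B is identified with its coefficient
   sequence (a_k) in the orthonormal basis e_k(z) = z^k/sqrt(k!):
   phi = sum_k a_k e_k, ||phi||^2 = sum_k |a_k|^2. *)
Definition cseq := nat -> Cx.

Definition sq_summable (a : cseq) : Prop :=
  exists l, infinite_sum (fun k => Cnorm2 (a k)) l.

(* B_p : closed span of {e_k : k >= p}. *)
Definition in_Bp (p : nat) (a : cseq) : Prop :=
  sq_summable a /\ forall k, (k < p)%nat -> a k = C0.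

Definition dist2_le (a b : cseq) (eps : R) : Prop :=
  forall N, sum_f_R0 (fun k => Cnorm2 (Csub (a k) (b k))) N <= eps.

Definition conv (xs : nat -> cseq) (x : cseq) : Prop :=
  forall eps, eps > 0 -> exists J, forall j, (j >= J)%nat -> dist2_le (xs j) x eps.

Fixpoint dom_pow (X D : cseq -> Prop) (T : cseq -> cseq) (n : nat) (x : cseq) : Prop :=
  match n with
  | O => X x
  | S n' => D x /\ dom_pow X D T n' (T x)
  end.

Fixpoint iterT (T : cseq -> cseq) (n : nat) (x : cseq) : cseq :=
  match n with
  | O => x
  | S n' => iterT T n' (T x)
  end.

Definition dense_in (X S : cseq -> Prop) : Prop :=
  forall x eps, X x -> eps > 0 -> exists y, S y /\ dist2_le y x eps.

Definition closed_pow (X D : cseq -> Prop) (T : cseq -> cseq) (n : nat) : Prop :=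
  forall (xs : nat -> cseq) x y,
    (forall j, dom_pow X D T n (xs j)) -> X x -> X y ->
    conv xs x -> conv (fun j => iterT T n (xs j)) y ->
    dom_pow X D T n x /\ (forall k, iterT T n x k = y k).

(* Devaney chaos of the densely defined operator (T, D) on X. *)
Definition chaotic (X D : cseq -> Prop) (T : cseq -> cseq) : Prop :=
  (forall x, D x -> X x) /\
  dense_in X D /\
  (forall n, (n >= 1)%nat -> closed_pow X D T n) /\
  (exists phi, (forall n, (n >= 1)%nat -> dom_pow X D T n phi) /\
     dense_in X (fun x => exists n, forall k, iterT T n phi k = x k)) /\
  dense_in X (fun x => X x /\ exists j, (j >= 1)%nat /\ dom_pow X D T j x /\
                                   forall k, iterT T j x k = x k).

(* omega_j = sqrt(j! (j+m)!) / (j-p)!  (used for j >= p). *)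
Definition omega (p m j : nat) : R :=
  sqrt (INR (fact j * fact (j + m))) / INR (fact (j - p)).

Definition Hbreve (p m : nat) (a : cseq) : cseq :=
  fun k => if Nat.ltb k p then C0 else Cscal (omega p m k) (a (S k)).

Definition dom_H (p m : nat) (a : cseq) : Prop :=
  in_Bp p a /\ in_Bp p (Hbreve p m a).

(* Main.v *)
Require Import Defs.
From Stdlib Require Import Reals Lra Lia Cantor Factorial.
Open Scope R_scope.


Definition bps (f : nat -> R) : Prop := exists B, forall M, sum_f_R0 f M <= B.

Lemma Cnorm2_ge0 u : 0 <= Cnorm2 u.
Proof. unfold Cnorm2. nra. Qed.

Lemma psum_growing (f : nat -> R) : (forall k, 0 <= f k) -> Un_growing (sum_f_R0 f).
Proof. intros H n. simpl. specialize (H (S n)). lra. Qed.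

Lemma sum_mono (f : nat -> R) a b : (forall k, 0 <= f k) -> (a <= b)%nat ->
  sum_f_R0 f a <= sum_f_R0 f b.
Proof.
  intros H Hab. induction Hab. lra. simpl. specialize (H (S m)). lra.
Qed.

Lemma sq_bps a : sq_summable a <-> bps (fun k => Cnorm2 (a k)).
Proof.
  split.
  - intros [l Hl]. exists l. intro M. apply growing_ineq; auto.
    apply psum_growing. intro; apply Cnorm2_ge0.
  - intros [B HB]. destruct (growing_cv (sum_f_R0 (fun k => Cnorm2 (a k)))) as [l Hl].
    apply psum_growing. intro; apply Cnorm2_ge0.
    exists B. intros x [n ->]. apply HB.
    exists l. exact Hl.
Qed.

Lemma bps_le f g : (forall k, f k <= g k) -> bps g -> bps f.
Proof.
  intros H [B HB]. exists B. intro M. eapply Rle_trans; [|apply (HB M)].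
  apply sum_Rle. auto.
Qed.

Lemma bps_plus f g : bps f -> bps g -> bps (fun k => f k + g k).
Proof.
  intros [A HA] [B HB]. exists (A+B). intro M. rewrite plus_sum.
  specialize (HA M); specialize (HB M). lra.
Qed.

Lemma sum_trunc_eq (f : nat -> R) L M : (L <= M)%nat ->
  sum_f_R0 (fun k => if Nat.leb k L then f k else 0) M = sum_f_R0 f L.
Proof.
  intro H. induction H.
  - apply sum_eq. intros i Hi. replace (Nat.leb i L) with true; auto.
    symmetry; apply Nat.leb_le; lia.
  - cbn [sum_f_R0]. rewrite IHle. replace (Nat.leb (S m) L) with false. lra.
    symmetry; apply Nat.leb_gt; lia.
Qed.

Lemma bps_trunc f L : (forall k, 0 <= f k) -> bps (fun k => if Nat.leb k L then f k else 0).
Proof.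
  intro H. exists (sum_f_R0 f L). intro M.
  destruct (Compare_dec.le_lt_dec L M).
  - rewrite sum_trunc_eq; auto; lra.
  - eapply Rle_trans; [apply sum_Rle|].
    intros n Hn. instantiate (1 := f). destruct (Nat.leb n L); auto. lra.
    apply sum_mono; auto; lia.
Qed.

Lemma sum_zero M : sum_f_R0 (fun _ => 0) M = 0.
Proof. induction M; simpl; lra. Qed.

Lemma sum_shift_eq (g : nat -> R) e M :
  sum_f_R0 (fun k => if Nat.leb e k then g (k - e)%nat else 0) M =
  if Nat.ltb M e then 0 else sum_f_R0 g (M - e).
Proof.
  induction M.
  - simpl. destruct e; simpl; auto.
  - cbn [sum_f_R0]. rewrite IHM. destruct (Nat.ltb M e) eqn:E1; destruct (Nat.leb e (S M)) eqn:E2;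
    destruct (Nat.ltb (S M) e) eqn:E3;
    repeat match goal with H : Nat.ltb _ _ = true |- _ => apply Nat.ltb_lt in H
    | H : Nat.ltb _ _ = false |- _ => apply Nat.ltb_ge in H
    | H : Nat.leb _ _ = true |- _ => apply Nat.leb_le in H
    | H : Nat.leb _ _ = false |- _ => apply Nat.leb_gt in H end; try lia.
    + replace (S M - e)%nat with 0%nat by lia. cbn [sum_f_R0]. lra.
    + lra.
    + replace (S M - e)%nat with (S (M - e)) by lia. cbn [sum_f_R0]. lra.
Qed.

Lemma sum_shift_le (g : nat -> R) e M : (forall k, 0 <= g k) ->
  sum_f_R0 (fun k => if Nat.leb e k then g (k - e)%nat else 0) M <= sum_f_R0 g M.
Proof.
  intro H. rewrite sum_shift_eq. destruct (Nat.ltb M e).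
  apply cond_pos_sum; auto. apply sum_mono; auto; lia.
Qed.

Lemma bps_shift g e : (forall k, 0 <= g k) -> bps g ->
  bps (fun k => if Nat.leb e k then g (k - e)%nat else 0).
Proof.
  intros H [B HB]. exists B. intro M. eapply Rle_trans. apply sum_shift_le; auto. auto.
Qed.

Lemma geom_sum C M : 0 <= C -> sum_f_R0 (fun k => C * (1/2)^k) M <= 2 * C.
Proof.
  intro HC. rewrite (sum_eq _ (fun k => (1/2)^k * C)) by (intros; ring).
  rewrite <- (scal_sum (fun k => (1/2)^k) M C).
  rewrite tech3 by lra. assert (0 < (1/2)^(S M)) by (apply pow_lt; lra).
  replace ((1 - (1/2)^(S M)) / (1 - 1/2)) with (2 - 2 * (1/2)^(S M)) by field.
  nra.
Qed.

Lemma bps_geom C : 0 <= C -> bps (fun k => C * (1/2)^k).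
Proof. intro. exists (2*C). intro; apply geom_sum; auto. Qed.


Lemma tail_small a eps : sq_summable a -> eps > 0 -> exists L, forall L', (L <= L')%nat ->
  forall M, sum_f_R0 (fun k => if Nat.leb k L' then 0 else Cnorm2 (a k)) M <= eps.
Proof.
  intros [l Hl] He. destruct (Hl eps He) as [L HL]. exists L. intros L' HL' M.
  set (f := fun k => Cnorm2 (a k)).
  assert (Hf : forall k, 0 <= f k) by (intro; apply Cnorm2_ge0).
  assert (Hg : Un_growing (sum_f_R0 f)) by exact (psum_growing f Hf).
  assert (E : forall M, sum_f_R0 (fun k => if Nat.leb k L' then 0 else f k) M =
     sum_f_R0 f M - sum_f_R0 (fun k => if Nat.leb k L' then f k else 0) M).
  { intro. rewrite <- minus_sum. apply sum_eq. intros. destruct (Nat.leb i L'); lra. }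
  assert (mono : forall M, sum_f_R0 (fun k => if Nat.leb k L' then 0 else f k) M <=
                 sum_f_R0 (fun k => if Nat.leb k L' then 0 else f k) (max M L')).
  { intro. apply sum_mono. intro; destruct (Nat.leb k L'); auto; lra. lia. }
  eapply Rle_trans. apply mono. rewrite E. rewrite sum_trunc_eq by lia.
  assert (sum_f_R0 f (max M L') <= l) by (apply growing_ineq; auto).
  specialize (HL L (le_n _)). unfold Rdist in HL.
  assert (sum_f_R0 f L <= sum_f_R0 f L') by (apply sum_mono; auto).
  apply Rabs_def2 in HL. change (sum_f_R0 (fun k => Cnorm2 (a k)) L) with (sum_f_R0 f L) in HL. lra.
Qed.

Lemma coord_bound a : sq_summable a -> exists B, 0 <= B /\ forall k, Cnorm2 (a k) <= B.
Proof.
  intro H. apply sq_bps in H. destruct H as [B HB]. exists B. split.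
  - eapply Rle_trans; [|apply (HB 0%nat)]. simpl. apply Cnorm2_ge0.
  - intro k. eapply Rle_trans; [|apply (HB k)]. destruct k. simpl; lra.
    cbn [sum_f_R0]. assert (0 <= sum_f_R0 (fun k => Cnorm2 (a k)) k).
    apply cond_pos_sum; intro; apply Cnorm2_ge0. lra.
Qed.

Lemma fin_supp a L : (forall k, (L < k)%nat -> a k = C0) -> sq_summable a.
Proof.
  intro H. apply sq_bps. eapply bps_le; [|apply (bps_trunc (fun k => Cnorm2 (a k)) L)].
  - intro k. cbv beta. destruct (Nat.leb k L) eqn:E. lra. apply Nat.leb_gt in E. rewrite H by auto.
    unfold Cnorm2, C0; simpl; lra.
  - intro; apply Cnorm2_ge0.
Qed.

Lemma dom_pow_of (X D : cseq -> Prop) T n x :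
  (forall y, X y -> X (T y) -> D y) ->
  (forall i, (i <= n)%nat -> X (iterT T i x)) -> dom_pow X D T n x.
Proof.
  intros HD. revert x. induction n; intros x H; simpl.
  - apply (H 0%nat). lia.
  - split. apply HD. apply (H 0%nat); lia. apply (H 1%nat); lia.
    apply IHn. intros i Hi. apply (H (S i)). lia.
Qed.

Lemma Cnorm2_scal r u : Cnorm2 (Cscal r u) = r^2 * Cnorm2 u.
Proof. unfold Cnorm2, Cscal; simpl. ring. Qed.

Lemma Cnorm2_tri a b c : Cnorm2 (Csub a c) <= 2 * Cnorm2 (Csub a b) + 2 * Cnorm2 (Csub b c).
Proof. destruct a as [a1 a2], b as [b1 b2], c as [c1 c2]. unfold Cnorm2, Csub; simpl.
  pose proof (pow2_ge_0 (a1 - 2*b1 + c1)). pose proof (pow2_ge_0 (a2 - 2*b2 + c2)). nra. Qed.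

Lemma Cnorm2_sub_le a b : Cnorm2 (Csub a b) <= 2 * Cnorm2 a + 2 * Cnorm2 b.
Proof. destruct a as [a1 a2], b as [b1 b2]. unfold Cnorm2, Csub; simpl.
  pose proof (pow2_ge_0 (a1 + b1)). pose proof (pow2_ge_0 (a2 + b2)). nra. Qed.

Lemma Cnorm2_zero u : (forall eps, eps > 0 -> Cnorm2 u <= eps) -> u = C0.
Proof.
  destruct u as [x y]. unfold Cnorm2, C0; simpl. intro H.
  assert (x ^ 2 + y ^ 2 <= 0).
  { apply Rnot_lt_le. intro. specialize (H ((x^2+y^2)/2)). lra. }
  assert (x = 0) by nra. assert (y = 0) by nra. subst; auto.
Qed.


Section Op.
Variables p m : nat.
Hypothesis hm : (1 <= m)%nat.

Fixpoint W (n a : nat) : R := match n with O => 1 | S n' => W n' a * omega p m (a + n') end.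

Lemma omega_sq l : (p <= l)%nat -> INR (S l) <= (omega p m l)^2.
Proof.
  intro Hl. unfold omega.
  assert (HB : 0 < INR (fact (l - p))) by (apply lt_0_INR; apply lt_O_fact).
  assert (HA : 0 <= INR (fact l * fact (l + m))) by apply pos_INR.
  replace ((sqrt (INR (fact l * fact (l + m))) / INR (fact (l - p))) ^ 2)
    with (INR (fact l * fact (l + m)) / (INR (fact (l - p)) * INR (fact (l - p)))).
  2:{ unfold Rdiv. rewrite Rpow_mult_distr. simpl. rewrite Rmult_1_r.
      rewrite Rmult_1_r. rewrite sqrt_sqrt by auto. field. lra. }
  apply Rmult_le_reg_r with (INR (fact (l - p)) * INR (fact (l - p))). nra.
  unfold Rdiv. rewrite Rmult_assoc, Rinv_l, Rmult_1_r by nra.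
  rewrite <- !mult_INR. apply le_INR.
  assert (H1 : (fact (l - p) <= fact l)%nat) by (apply fact_le; lia).
  assert (H2 : (fact (S l) <= fact (l + m))%nat) by (apply fact_le; lia).
  change (fact (S l)) with (S l * fact l)%nat in H2.
  assert (H3 : (S l * fact (l - p) <= S l * fact l)%nat) by (apply Nat.mul_le_mono_l; auto).
  assert (H4 : (fact (l - p) * (S l * fact (l - p)) <= fact l * fact (l + m))%nat).
  { apply Nat.mul_le_mono; lia. }
  lia.
Qed.

Lemma omega_ge0 l : 0 <= omega p m l.
Proof.
  unfold omega. apply Rmult_le_pos. apply sqrt_pos.
  left; apply Rinv_0_lt_compat, lt_0_INR, lt_O_fact.
Qed.

Lemma omega_ge1 l : (p <= l)%nat -> 1 <= omega p m l.
Proof.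
  intro H. pose proof (omega_sq l H). pose proof (omega_ge0 l).
  rewrite S_INR in H0. pose proof (pos_INR l). nra.
Qed.

Lemma W_ge1 n a : (p <= a)%nat -> 1 <= W n a.
Proof.
  intro H. induction n; simpl. lra. pose proof (omega_ge1 (a + n) ltac:(lia)). nra.
Qed.

Lemma W_split d e a : W (d + e) a = W d a * W e (a + d).
Proof.
  induction e; simpl. rewrite Nat.add_0_r; ring.
  rewrite Nat.add_succ_r. simpl. rewrite IHe. rewrite Nat.add_assoc. ring.
Qed.

Lemma W_low d a : (p <= a)%nat -> 4^d <= 64 * (W d a)^2.
Proof.
  intro H. induction d.
  - simpl; lra.
  - simpl W. pose proof (omega_sq (a + d) ltac:(lia)). pose proof (omega_ge1 (a+d) ltac:(lia)).
    pose proof (W_ge1 d a H).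
    destruct (Compare_dec.le_lt_dec 3 (a + d)).
    + assert (4 <= omega p m (a+d) ^2).
      { eapply Rle_trans; [|apply H0]. replace 4 with (INR 4) by (simpl; lra).
        apply le_INR; lia. }
      simpl pow. simpl pow in IHd. nra.
    + assert (d <= 2)%nat by lia.
      assert (4 ^ S d <= 64).
      { destruct d as [|[|[|]]]; simpl; try lra. lia. }
      assert (1 <= W d a * omega p m (a+d)) by nra. nra.
Qed.


Lemma iter_formula n a k : (p <= k)%nat -> iterT (Hbreve p m) n a k = Cscal (W n k) (a (k + n)%nat).
Proof.
  revert a. induction n; intros a Hk.
  - simpl. rewrite Nat.add_0_r. destruct (a k); unfold Cscal; simpl; f_equal; ring.
  - simpl iterT. rewrite IHn by auto. unfold Hbreve at 1.
    replace (Nat.ltb (k + n) p) with false by (symmetry; apply Nat.ltb_ge; lia).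
    simpl W. replace (k + S n)%nat with (S (k + n)) by lia.
    destruct (a (S (k+n))). unfold Cscal; simpl. f_equal; ring.
Qed.

Lemma iter_low n a k : (k < p)%nat -> (1 <= n)%nat -> iterT (Hbreve p m) n a k = C0.
Proof.
  intros Hk Hn. destruct n. lia. simpl iterT. clear Hn. revert a. induction n; intro a.
  - simpl. unfold Hbreve. replace (Nat.ltb k p) with true; auto. symmetry; apply Nat.ltb_lt; auto.
  - simpl iterT. apply IHn.
Qed.

Lemma iter_inter x n i : in_Bp p x -> in_Bp p (iterT (Hbreve p m) n x) -> (i <= n)%nat ->
  in_Bp p (iterT (Hbreve p m) i x).
Proof.
  intros Hx Hn Hi. destruct i. simpl; auto.
  split.
  2:{ intros k Hk. apply iter_low; lia. }
  apply sq_bps. set (e := (n - S i)%nat).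
  eapply bps_le.
  2:{ apply bps_plus. apply (bps_trunc (fun k => Cnorm2 (iterT (Hbreve p m) (S i) x k)) (p + e)).
      intro; apply Cnorm2_ge0.
      apply (bps_shift (fun k => Cnorm2 (iterT (Hbreve p m) n x k)) e). intro; apply Cnorm2_ge0.
      apply sq_bps. apply Hn. }
  intro k. cbv beta. destruct (Nat.leb k (p + e)) eqn:E.
  - assert (0 <= if Nat.leb e k then Cnorm2 (iterT (Hbreve p m) n x (k - e)%nat) else 0).
    { destruct (Nat.leb e k); [apply Cnorm2_ge0|lra]. }
    lra.
  - apply Nat.leb_gt in E. replace (Nat.leb e k) with true by (symmetry; apply Nat.leb_le; lia).
    rewrite !iter_formula by lia. rewrite !Cnorm2_scal.
    replace n with (e + S i)%nat at 1 by lia. rewrite W_split.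
    replace (k - e + e)%nat with k by lia. replace (k - e + n)%nat with (k + S i)%nat by lia.
    pose proof (W_ge1 e (k - e) ltac:(lia)). pose proof (W_ge1 (S i) k ltac:(lia)).
    pose proof (Cnorm2_ge0 (x (k + S i)%nat)).
    assert (W (S i) k ^ 2 * Cnorm2 (x (k + S i)%nat) <= (W e (k - e))^2 * (W (S i) k ^ 2 * Cnorm2 (x (k + S i)%nat))).
    { rewrite <- (Rmult_1_l (W (S i) k ^ 2 * _)) at 1. apply Rmult_le_compat_r. nra. nra. }
    lra.
Qed.

End Op.


Lemma inv_le64 u v : 0 < u -> 0 < v -> v <= 64 * u -> / u <= 64 * / v.
Proof.
  intros Hu Hv H. replace (/ u) with (64 * / (64 * u)) by (field; lra).
  apply Rmult_le_compat_l. lra. apply Rinv_le_contravar; auto.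
Qed.

Lemma half_pow n : (1/2)^n = / 2^n.
Proof. rewrite <- pow_inv. f_equal. lra. Qed.

Lemma Csub_zero a b : Csub a b = C0 -> a = b.
Proof. destruct a, b; unfold Csub, C0; simpl; intro H; inversion H. f_equal; lra. Qed.

Lemma Cnorm2_sym a b : Cnorm2 (Csub a b) = Cnorm2 (Csub b a).
Proof. unfold Cnorm2, Csub; simpl; ring. Qed.

Lemma dist_coord a b eps k : dist2_le a b eps -> Cnorm2 (Csub (a k) (b k)) <= eps.
Proof.
  intro H. eapply Rle_trans; [|apply (H k)]. destruct k. simpl; apply Rle_refl.
  cbn [sum_f_R0]. assert (0 <= sum_f_R0 (fun k => Cnorm2 (Csub (a k) (b k))) k).
  apply cond_pos_sum; intro; apply Cnorm2_ge0. lra.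
Qed.

Lemma Cscal_sub r a b : Csub (Cscal r a) (Cscal r b) = Cscal r (Csub a b).
Proof. unfold Csub, Cscal; simpl; f_equal; ring. Qed.

Lemma Cscal_1 u : Cscal 1 u = u.
Proof. destruct u; unfold Cscal; simpl; f_equal; ring. Qed.

Lemma Cscal_Cscal r s u : Cscal r (Cscal s u) = Cscal (r * s) u.
Proof. destruct u; unfold Cscal; simpl; f_equal; ring. Qed.

Lemma in_Bp_ext p a b : (forall k, a k = b k) -> in_Bp p a -> in_Bp p b.
Proof.
  intros E [[l Hl] Hz]. split.
  - exists l. intros eps He. destruct (Hl eps He) as [N HN]. exists N. intros n Hn.
    rewrite (sum_eq _ (fun k => Cnorm2 (a k))). auto. intros; rewrite E; auto.
  - intros k Hk. rewrite <- E. auto.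
Qed.

Section Main.
Variables p m : nat.
Hypothesis hm : (1 <= m)%nat.

Lemma part_dense : dense_in (in_Bp p) (dom_H p m).
Proof.
  intros x eps Hx He. destruct (tail_small x eps (proj1 Hx) He) as [L HL].
  set (y := fun k => if Nat.leb k L then x k else C0).
  assert (Hy : in_Bp p y).
  { split. apply (fin_supp y L). intros k Hk. unfold y.
    replace (Nat.leb k L) with false; auto. symmetry; apply Nat.leb_gt; auto.
    intros k Hk. unfold y. destruct (Nat.leb k L); auto. apply Hx; auto. }
  exists y. split.
  - split; auto. split.
    + apply (fin_supp _ L). intros k Hk. unfold Hbreve. destruct (Nat.ltb k p); auto.
      unfold y. replace (Nat.leb (S k) L) with false. unfold Cscal, C0; simpl; f_equal; ring.
      symmetry; apply Nat.leb_gt; lia.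
    + intros k Hk. unfold Hbreve. replace (Nat.ltb k p) with true; auto.
      symmetry; apply Nat.ltb_lt; auto.
  - intro M. eapply Rle_trans; [|apply (HL L (le_n _) M)]. right. apply sum_eq.
    intros i _. unfold y. destruct (Nat.leb i L). unfold Cnorm2, Csub; simpl; ring.
    rewrite Cnorm2_sym. unfold Cnorm2, Csub, C0; simpl; ring.
Qed.

Lemma part_closed n : (n >= 1)%nat -> closed_pow (in_Bp p) (dom_H p m) (Hbreve p m) n.
Proof.
  intros Hn xs x y Hdom Hx Hy cx cy.
  assert (E : forall k, iterT (Hbreve p m) n x k = y k).
  { intro k. destruct (Compare_dec.lt_dec k p).
    - rewrite iter_low by auto. symmetry. apply Hy; auto.
    - apply Csub_zero. apply Cnorm2_zero. intros eps He.
      set (w := W p m n k).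
      destruct (cx (eps / (4 * (w^2 + 1)))) as [J1 HJ1].
      { apply Rdiv_lt_0_compat. lra. pose proof (pow2_ge_0 w). lra. }
      destruct (cy (eps / 4)) as [J2 HJ2]. lra.
      specialize (HJ1 (max J1 J2) ltac:(lia)). specialize (HJ2 (max J1 J2) ltac:(lia)).
      set (j := max J1 J2) in *.
      eapply Rle_trans. apply (Cnorm2_tri _ (iterT (Hbreve p m) n (xs j) k)).
      pose proof (dist_coord _ _ _ k HJ2). cbv beta in H.
      rewrite !iter_formula by lia. rewrite Cscal_sub, Cnorm2_scal. fold w.
      pose proof (dist_coord _ _ _ (k+n)%nat HJ1). rewrite Cnorm2_sym in H0.
      rewrite iter_formula in H by lia. fold w in H.
      assert (0 <= w^2) by apply pow2_ge_0.
      assert (w ^ 2 * Cnorm2 (Csub (x (k + n)%nat) (xs j (k + n)%nat)) <= eps / 4).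
      { eapply Rle_trans. apply Rmult_le_compat_l. auto. exact H0.
        apply Rmult_le_reg_r with (4 * (w^2+1)). lra.
        replace (w ^ 2 * (eps / (4 * (w ^ 2 + 1))) * (4 * (w ^ 2 + 1))) with (w^2 * eps) by (field; lra).
        replace (eps / 4 * (4 * (w ^ 2 + 1))) with (eps * (w^2 + 1)) by field. nra. }
      lra. }
  split; auto.
  apply dom_pow_of. intros z Hz1 Hz2; split; auto.
  intros i Hi. apply (iter_inter p m hm x n i Hx); auto.
  apply (in_Bp_ext p y). intro; auto. auto.
Qed.

End Main.


Section Per.
Variables p m : nat.
Hypothesis hm : (1 <= m)%nat.

Definition yper (N : nat) (x : cseq) : cseq := fun k =>
  if Nat.ltb k p then C0 else
  let a := (p + (k - p) mod N)%nat in Cscal (/ W p m (k - a) a) (x a).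

Lemma yper_low N x k : (p <= k < p + N)%nat -> yper N x k = x k.
Proof.
  intro H. unfold yper. replace (Nat.ltb k p) with false by (symmetry; apply Nat.ltb_ge; lia).
  rewrite Nat.mod_small by lia. replace (p + (k - p))%nat with k by lia.
  rewrite Nat.sub_diag. simpl W. rewrite Rinv_1. apply Cscal_1.
Qed.

Lemma yper_periodic N x k : (1 <= N)%nat -> iterT (Hbreve p m) N (yper N x) k = yper N x k.
Proof.
  intro HN. destruct (Compare_dec.lt_dec k p).
  - rewrite iter_low by auto. unfold yper. replace (Nat.ltb k p) with true; auto.
    symmetry; apply Nat.ltb_lt; auto.
  - rewrite iter_formula by lia. unfold yper.
    replace (Nat.ltb k p) with false by (symmetry; apply Nat.ltb_ge; lia).
    replace (Nat.ltb (k + N) p) with false by (symmetry; apply Nat.ltb_ge; lia).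
    replace (k + N - p)%nat with ((k - p) + 1 * N)%nat by lia.
    rewrite Nat.Div0.mod_add. set (r := ((k - p) mod N)%nat).
    assert (r <= k - p)%nat by apply Nat.Div0.mod_le.
    replace (k + N - (p + r))%nat with ((k - (p + r)) + N)%nat by lia.
    rewrite W_split. replace (p + r + (k - (p + r)))%nat with k by lia.
    rewrite Cscal_Cscal. f_equal.
    pose proof (W_ge1 p m hm (k - (p + r)) (p + r) ltac:(lia)).
    pose proof (W_ge1 p m hm N k ltac:(lia)). field. lra.
Qed.

Lemma yper_bound N x B k : (1 <= N)%nat -> (forall j, Cnorm2 (x j) <= B) -> (p + N <= k)%nat ->
  Cnorm2 (yper N x k) <= 64 * B * (1/2)^N * (1/2)^(k - (p + N)).
Proof.
  intros HN HB Hk. unfold yper.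
  replace (Nat.ltb k p) with false by (symmetry; apply Nat.ltb_ge; lia).
  set (r := ((k - p) mod N)%nat). set (q := ((k - p) / N)%nat).
  assert (Hdm : (k - p = N * q + r)%nat) by apply Nat.div_mod_eq.
  assert (Hr : (r < N)%nat) by (apply Nat.mod_upper_bound; lia).
  assert (Hq : (1 <= q)%nat) by nia.
  assert (N <= N * q)%nat by nia. clearbody r q.
  set (d := (k - (p + r))%nat).
  assert (Hd : (k - p <= 2 * d)%nat) by (unfold d; lia).
  rewrite Cnorm2_scal.
  pose proof (W_ge1 p m hm d (p + r) ltac:(lia)).
  pose proof (W_low p m hm d (p + r) ltac:(lia)).
  assert (H2 : 2 ^ (k - p) <= 4 ^ d).
  { replace 4 with (2^2) by ring. rewrite <- pow_mult. apply Rle_pow; [lra|lia]. }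
  assert (Hinv : / (W p m d (p + r))^2 <= 64 * / 2 ^ (k - p)).
  { apply inv_le64. nra. apply pow_lt; lra. lra. }
  assert (E : (1/2)^N * (1/2)^(k - (p+N)) = / 2 ^ (k - p)).
  { rewrite <- pow_add. rewrite half_pow. f_equal. f_equal. lia. }
  replace (64 * B * (1 / 2) ^ N * (1 / 2) ^ (k - (p + N))) with (64 * / 2 ^ (k - p) * B)
    by (rewrite <- E; ring).
  rewrite pow_inv. apply Rmult_le_compat; auto.
  left; apply Rinv_0_lt_compat; nra. apply Cnorm2_ge0.
Qed.

Lemma sum_scal_l c f M : sum_f_R0 (fun k => c * f k) M = c * sum_f_R0 f M.
Proof. induction M; cbn [sum_f_R0]. ring. rewrite IHM. ring. Qed.

Lemma part_periodic : dense_in (in_Bp p) (fun x => in_Bp p x /\ exists j : nat, (j >= 1)%nat /\ dom_pow (in_Bp p) (dom_H p m) (Hbreve p m) j x /\ forall k, iterT (Hbreve p m) j x k = x k).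
Proof.
  intros x eps Hx He.
  destruct (coord_bound x (proj1 Hx)) as [B [HB0 HB]].
  destruct (tail_small x (eps/8) (proj1 Hx)) as [L HL]. lra.
  destruct (pow_lt_1_zero (1/2) ltac:(rewrite Rabs_pos_eq; lra) (eps / (2 * (256 * B + 1))))
    as [N1 HN1].
  { apply Rdiv_lt_0_compat; lra. }
  set (N := max N1 (max 1 (L + 1))).
  assert (HN : (1 <= N)%nat) by lia.
  specialize (HN1 N ltac:(lia)). rewrite Rabs_pos_eq in HN1 by (apply pow_le; lra).
  set (C := 64 * B * (1/2)^N).
  assert (HC : 0 <= C) by (unfold C; apply Rmult_le_pos; [lra|apply pow_le; lra]).
  set (F := fun k => if Nat.leb (p + N) k then C * (1/2)^(k - (p + N)) else 0).
  assert (HF0 : forall k, 0 <= F k).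
  { intro k; unfold F. destruct (Nat.leb (p+N) k). apply Rmult_le_pos; auto; apply pow_le; lra. lra. }
  set (y := yper N x).
  assert (Hyb : forall k, (p + N <= k)%nat -> Cnorm2 (y k) <= F k).
  { intros k Hk. unfold F. replace (Nat.leb (p + N) k) with true by (symmetry; apply Nat.leb_le; auto).
    apply yper_bound; auto. }
  assert (Hy : in_Bp p y).
  { split.
    - apply sq_bps. eapply bps_le.
      2:{ apply bps_plus. apply (bps_trunc (fun k => Cnorm2 (y k)) (p + N)). intro; apply Cnorm2_ge0.
          apply (bps_shift (fun j => C * (1/2)^j) (p + N)). intro; apply Rmult_le_pos; auto; apply pow_le; lra.
          apply bps_geom; auto. }
      intro k. cbv beta. fold (F k). destruct (Nat.leb k (p + N)) eqn:E.
      + specialize (HF0 k). lra.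
      + apply Nat.leb_gt in E. specialize (Hyb k ltac:(lia)). lra.
    - intros k Hk. unfold y, yper. replace (Nat.ltb k p) with true; auto.
      symmetry; apply Nat.ltb_lt; auto. }
  assert (Hper : forall k, iterT (Hbreve p m) N y k = y k) by (intro; apply yper_periodic; auto).
  exists y. split.
  - split; auto. exists N. split; auto. split; auto.
    apply dom_pow_of. intros z Hz1 Hz2; split; auto.
    intros i Hi. apply (iter_inter p m hm y N i Hy); auto.
    apply (in_Bp_ext p y). intro; symmetry; auto. auto.
  - intro M.
    set (Hx' := fun k => if Nat.leb k (p + N - 1) then 0 else Cnorm2 (x k)).
    eapply Rle_trans.
    { apply (sum_Rle _ (fun k => 2 * F k + 2 * Hx' k)). intros k _.
      assert (0 <= Hx' k) by (unfold Hx'; destruct (Nat.leb k (p + N - 1)); [lra|apply Cnorm2_ge0]).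
      pose proof (HF0 k).
      destruct (Compare_dec.lt_dec k p).
      - unfold y, yper. replace (Nat.ltb k p) with true by (symmetry; apply Nat.ltb_lt; auto).
        rewrite (proj2 Hx k l). unfold Cnorm2, Csub, C0; simpl. lra.
      - destruct (Compare_dec.lt_dec k (p + N)).
        + unfold y. rewrite yper_low by lia. unfold Cnorm2, Csub; simpl. lra.
        + eapply Rle_trans. apply Cnorm2_sub_le. specialize (Hyb k ltac:(lia)).
          unfold Hx'. replace (Nat.leb k (p + N - 1)) with false by (symmetry; apply Nat.leb_gt; lia).
          lra. }
    rewrite plus_sum, !sum_scal_l.
    assert (sum_f_R0 F M <= 2 * C).
    { eapply Rle_trans. apply (sum_shift_le (fun j => C * (1/2)^j) (p + N)).
      intro; apply Rmult_le_pos; auto; apply pow_le; lra. apply geom_sum; auto. }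
    assert (sum_f_R0 Hx' M <= eps / 8) by (apply HL; lia).
    assert (256 * B * (1/2)^N <= eps / 2).
    { assert ((256 * B + 1) * (1/2)^N <= eps / 2).
      { apply Rmult_le_reg_r with (/ (2 * (256 * B + 1))). apply Rinv_0_lt_compat; lra.
        replace ((256 * B + 1) * (1 / 2) ^ N * / (2 * (256 * B + 1))) with ((1/2)^N / 2) by (field; lra).
        replace (eps / 2 * / (2 * (256 * B + 1))) with (eps / (2 * (256 * B + 1)) / 2) by (field; lra).
        lra. }
      assert (0 <= (1/2)^N) by (apply pow_le; lra). nra. }
    unfold C in *. lra.
Qed.

End Per.


Fixpoint comp (n s : nat) : nat :=
  match s with O => fst (Cantor.of_nat n) | S s' => comp (snd (Cantor.of_nat n)) s' end.

Fixpoint enc (f : nat -> nat) (N : nat) : nat :=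
  match N with O => O | S N' => Cantor.to_nat (f O, enc (fun s => f (S s)) N') end.

Lemma comp_enc N : forall f s, (s < N)%nat -> comp (enc f N) s = f s.
Proof.
  induction N; intros f s Hs. lia.
  destruct s; cbn [comp enc]; rewrite Cantor.cancel_of_to; cbn [fst snd]; auto.
  apply (IHN (fun s => f (S s))). lia.
Qed.

Lemma of_nat_le u : (fst (Cantor.of_nat u) <= u /\ snd (Cantor.of_nat u) <= u)%nat.
Proof.
  pose proof (Cantor.cancel_to_of u). destruct (Cantor.of_nat u) as [x y] eqn:E.
  pose proof (Cantor.to_nat_non_decreasing x y). simpl. lia.
Qed.

Lemma comp_le s : forall n, (comp n s <= n)%nat.
Proof.
  induction s; intro n; simpl. apply of_nat_le.
  specialize (IHs (snd (Cantor.of_nat n))). pose proof (of_nat_le n). lia.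
Qed.

Definition qv (a b q : nat) : R := (INR a - INR b) / INR (S q).

Definition val (i s : nat) : Cx :=
  let u := comp i (3 + s) in let q := comp i 2 in
  (qv (fst (Cantor.of_nat (fst (Cantor.of_nat u)))) (snd (Cantor.of_nat (fst (Cantor.of_nat u)))) q,
   qv (fst (Cantor.of_nat (snd (Cantor.of_nat u)))) (snd (Cantor.of_nat (snd (Cantor.of_nat u)))) q).

Lemma INR_le_pow2 i : INR i <= 2 ^ i.
Proof. induction i. simpl; lra. rewrite S_INR. simpl. pose proof (pow_R1_Rle 2 i ltac:(lra)). lra. Qed.

Lemma qv_bound a b q i : (a <= i)%nat -> (b <= i)%nat -> (qv a b q)^2 <= 4^i.
Proof.
  intros Ha Hb. unfold qv.
  apply le_INR in Ha. apply le_INR in Hb. pose proof (pos_INR a). pose proof (pos_INR b).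
  pose proof (INR_le_pow2 i). rewrite S_INR. pose proof (pos_INR q).
  assert (Hq : 1 <= INR q + 1) by lra.
  assert (((INR a - INR b) / (INR q + 1))^2 <= (INR a - INR b)^2).
  { unfold Rdiv. rewrite Rpow_mult_distr. pose proof (pow2_ge_0 (INR a - INR b)).
    assert (0 < / (INR q + 1) <= 1).
    { split. apply Rinv_0_lt_compat; lra. rewrite <- Rinv_1. apply Rinv_le_contravar; lra. }
    assert ((/ (INR q + 1))^2 <= 1) by nra. nra. }
  replace 4 with (2 * 2) by ring. rewrite Rpow_mult_distr. nra.
Qed.

Lemma val_bound i s : Cnorm2 (val i s) <= 2 * 4^i.
Proof.
  unfold val, Cnorm2. cbv zeta. cbn [fst snd].
  set (u := comp i (3 + s)). assert (Hu : (u <= i)%nat) by apply comp_le.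
  pose proof (of_nat_le u) as [H1 H2].
  pose proof (of_nat_le (fst (Cantor.of_nat u))) as [H3 H4].
  pose proof (of_nat_le (snd (Cantor.of_nat u))) as [H5 H6].
  pose proof (qv_bound (fst (Cantor.of_nat (fst (Cantor.of_nat u)))) (snd (Cantor.of_nat (fst (Cantor.of_nat u)))) (comp i 2) i ltac:(lia) ltac:(lia)).
  pose proof (qv_bound (fst (Cantor.of_nat (snd (Cantor.of_nat u)))) (snd (Cantor.of_nat (snd (Cantor.of_nat u)))) (comp i 2) i ltac:(lia) ltac:(lia)).
  lra.
Qed.

Lemma frac_le A X Y : 0 < X -> 0 < Y -> 0 <= A -> A * X <= Y -> A * / Y <= / X.
Proof.
  intros HX HY HA H. apply Rmult_le_reg_r with (X * Y). nra.
  replace (A * / Y * (X * Y)) with (A * X) by (field; lra).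
  replace (/ X * (X * Y)) with Y by (field; lra). auto.
Qed.

Lemma INR_toZ z : INR (Z.to_nat z) - INR (Z.to_nat (- z)) = IZR z.
Proof.
  destruct z as [|pz|pz]; cbn [Z.to_nat Z.opp].
  - simpl; lra.
  - rewrite INR_IPR. unfold IZR. change (INR 0) with 0. lra.
  - rewrite INR_IPR. unfold IZR. change (INR 0) with 0. lra.
Qed.

Lemma approx r q : let z := up (r * INR (S q)) in
  Cnorm2 (0,0) = 0 /\ (qv (Z.to_nat z) (Z.to_nat (- z)) q - r)^2 <= / INR (S q).
Proof.
  intro z. split. unfold Cnorm2; simpl; ring.
  unfold qv. rewrite INR_toZ. destruct (archimed (r * INR (S q))) as [H1 H2]. fold z in H1, H2.
  assert (HQ : 1 <= INR (S q)) by (rewrite S_INR; pose proof (pos_INR q); lra).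
  replace (IZR z / INR (S q) - r) with ((IZR z - r * INR (S q)) / INR (S q)) by (field; lra).
  assert (Ht : 0 < IZR z - r * INR (S q)) by lra.
  set (t := IZR z - r * INR (S q)) in *.
  unfold Rdiv. rewrite Rpow_mult_distr.
  assert (0 < / INR (S q) <= 1) by (split; [apply Rinv_0_lt_compat; lra|rewrite <- Rinv_1; apply Rinv_le_contravar; lra]).
  assert (t ^ 2 <= 1) by nra. set (v := / INR (S q)) in *.
  assert (v ^ 2 <= v) by nra. assert (0 <= t^2) by nra. nra.
Qed.

Lemma sum_ind L c M : 0 <= c -> sum_f_R0 (fun j => if Nat.ltb j L then c else 0) M <= INR L * c.
Proof.
  intro Hc. assert (sum_f_R0 (fun j => if Nat.ltb j L then c else 0) M <= INR (min (S M) L) * c).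
  { induction M; cbn [sum_f_R0].
    - destruct (Nat.ltb 0 L) eqn:E. apply Nat.ltb_lt in E. replace (min 1 L) with 1%nat by lia. simpl; lra.
      pose proof (pos_INR (min 1 L)). nra.
    - destruct (Nat.ltb (S M) L) eqn:E.
      + apply Nat.ltb_lt in E. replace (min (S (S M)) L) with (S (S M)) by lia.
        replace (min (S M) L) with (S M) in IHM by lia. rewrite (S_INR (S M)). lra.
      + assert (INR (min (S M) L) <= INR (min (S (S M)) L)) by (apply le_INR; lia). nra. }
  eapply Rle_trans. apply H. apply Rmult_le_compat_r; auto. apply le_INR; lia.
Qed.

Section Hyp.
Variables p m : nat.
Hypothesis hm : (1 <= m)%nat.

Fixpoint bb (i : nat) : nat := match i with O => O | S i' => (bb i' + (4 * S i' + p + 7))%nat end.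
Definition cc i := comp i 1.
Definition inblk i K := (p + bb i <= K < p + bb i + cc i)%nat.

Lemma bb_mono i j : (i <= j)%nat -> (bb i <= bb j)%nat.
Proof. intro H; induction H; simpl; lia. Qed.

Lemma bb_ge i : (i <= bb i)%nat.
Proof. induction i; simpl; lia. Qed.

Lemma cc_le i : (cc i <= i)%nat.
Proof. apply comp_le. Qed.

Lemma disj i j : (i < j)%nat -> (p + bb i + cc i <= p + bb j)%nat.
Proof.
  intro H. pose proof (bb_mono (S i) j H). simpl in H0. pose proof (cc_le i). lia.
Qed.

Lemma inblk_unique i j K : inblk i K -> inblk j K -> i = j.
Proof.
  unfold inblk. intros H1 H2. destruct (Nat.lt_total i j) as [h|[h|h]]; auto.
  pose proof (disj i j h); lia. pose proof (disj j i h); lia.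
Qed.

Fixpoint fb (f K : nat) : option nat :=
  match f with O => None | S f' =>
    if (Nat.leb (p + bb f') K && Nat.ltb K (p + bb f' + cc f'))%bool then Some f' else fb f' K end.

Lemma fb_some f K i : fb f K = Some i -> inblk i K.
Proof.
  induction f; simpl. discriminate.
  destruct (Nat.leb (p + bb f) K) eqn:E1; destruct (Nat.ltb K (p + bb f + cc f)) eqn:E2; simpl; auto.
  intro H; inversion H; subst. apply Nat.leb_le in E1. apply Nat.ltb_lt in E2. split; auto.
Qed.

Lemma fb_find f K i : inblk i K -> (i < f)%nat -> fb f K = Some i.
Proof.
  intros Hi. induction f; intro Hf. lia. simpl.
  destruct (Nat.leb (p + bb f) K && Nat.ltb K (p + bb f + cc f))%bool eqn:E.
  - apply andb_prop in E as [E1 E2]. apply Nat.leb_le in E1. apply Nat.ltb_lt in E2.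
    f_equal. apply (inblk_unique f i K); auto. split; auto.
  - destruct (Nat.eq_dec i f). subst. unfold inblk in Hi.
    replace (Nat.leb (p + bb f) K) with true in E by (symmetry; apply Nat.leb_le; lia).
    replace (Nat.ltb K (p + bb f + cc f)) with true in E by (symmetry; apply Nat.ltb_lt; lia).
    discriminate. apply IHf; lia.
Qed.

Definition phi (K : nat) : Cx :=
  match fb (S K) K with
  | Some i => Cscal (/ W p m (bb i) (K - bb i)) (val i (K - bb i - p))
  | None => C0 end.

Lemma phi_blk i K : inblk i K -> phi K = Cscal (/ W p m (bb i) (K - bb i)) (val i (K - bb i - p)).
Proof.
  intro H. unfold phi. rewrite (fb_find (S K) K i H). auto.
  pose proof (bb_ge i). unfold inblk in H. lia.
Qed.

Lemma phi_none K : (forall i, ~ inblk i K) -> phi K = C0.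
Proof.
  intro H. unfold phi. destruct (fb (S K) K) eqn:E; auto. apply fb_some in E. exfalso; eapply H; eauto.
Qed.

Lemma est n i k : (1 <= i)%nat -> (n <= bb (i - 1))%nat -> (p <= k)%nat -> inblk i (k + n) ->
  Cnorm2 (iterT (Hbreve p m) n phi k) <= (1/2)^i * (1/2)^k.
Proof.
  intros Hi Hn Hk Hb. rewrite iter_formula by auto. rewrite (phi_blk i) by auto.
  set (k' := (k + n - bb i)%nat). set (d := (bb i - n)%nat).
  assert (Hgap : (bb i = bb (i - 1) + (4 * i + p + 7))%nat).
  { destruct i. lia. simpl. replace (i - 0)%nat with i by lia. auto. }
  pose proof (cc_le i). unfold inblk in Hb.
  assert (Hkk : (k = k' + d)%nat) by (unfold k', d; lia).
  assert (Hd : (4 * i + p + 7 <= d)%nat) by (unfold d; lia).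
  assert (Hk' : (p <= k' < p + i)%nat) by (unfold k'; lia).
  assert (Hdn : (d + n = bb i)%nat) by (unfold d; lia).
  clearbody k' d. rewrite <- Hdn. rewrite W_split. rewrite <- Hkk.
  rewrite Cscal_Cscal, Cnorm2_scal.
  pose proof (W_ge1 p m hm d k' ltac:(lia)). pose proof (W_ge1 p m hm n k ltac:(lia)).
  replace (W p m n k * / (W p m d k' * W p m n k)) with (/ W p m d k') by (field; lra).
  pose proof (W_low p m hm d k' ltac:(lia)).
  pose proof (val_bound i (k' - p)).
  assert (Hinv : (/ W p m d k') ^ 2 <= 64 * / 4 ^ d).
  { rewrite pow_inv. apply inv_le64. nra. apply pow_lt; lra. lra. }
  assert (Hp : 128 * 4^i * (2^i * 2^k) <= 4^d).
  { replace 128 with (2^7) by ring. replace 4 with (2^2) by ring. rewrite <- !pow_mult, <- !pow_add.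
    apply Rle_pow. lra. lia. }
  assert (Hf : 128 * 4^i * / 4^d <= / (2^i * 2^k)).
  { apply frac_le; auto. apply Rmult_lt_0_compat; apply pow_lt; lra. apply pow_lt; lra.
    apply Rmult_le_pos. lra. apply pow_le; lra. }
  rewrite !half_pow. rewrite <- Rinv_mult.
  eapply Rle_trans; [|apply Hf].
  assert (0 <= (/ W p m d k')^2) by apply pow2_ge_0.
  assert (0 <= Cnorm2 (val i (k' - p))) by apply Cnorm2_ge0.
  assert (0 <= / 4 ^ d) by (left; apply Rinv_0_lt_compat, pow_lt; lra).
  assert (0 <= 4 ^ i) by (apply pow_le; lra).
  nra.
Qed.

Lemma pow_le1 x n : 0 <= x <= 1 -> x ^ n <= 1.
Proof. intro H. induction n; simpl. lra. pose proof (pow_le x n ltac:(lra)). nra. Qed.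

Lemma half_mono a b : (a <= b)%nat -> (1/2)^b <= (1/2)^a.
Proof.
  intro H. replace b with (a + (b - a))%nat by lia. rewrite pow_add.
  pose proof (pow_le (1/2) a ltac:(lra)).
  assert ((1/2)^(b-a) <= 1) by (apply pow_le1; lra). 
  assert (0 <= (1/2)^(b-a)) by (apply pow_le; lra). nra.
Qed.

Lemma tail_val n j k : (p <= k)%nat -> (forall i, inblk i (k + n) -> (j < i)%nat) -> (n <= bb j)%nat ->
  Cnorm2 (iterT (Hbreve p m) n phi k) <= (1/2)^(S j) * (1/2)^k.
Proof.
  intros Hk Hi Hn.
  assert (0 <= (1/2)^(S j) * (1/2)^k) by (apply Rmult_le_pos; apply pow_le; lra).
  destruct (fb (S (k + n)) (k + n)) eqn:E.
  - apply fb_some in E. specialize (Hi n0 E).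
    eapply Rle_trans. apply (est n n0 k); auto. lia.
    eapply Nat.le_trans. apply Hn. apply bb_mono. lia.
    apply Rmult_le_compat_r. apply pow_le; lra. apply half_mono; lia.
  - rewrite iter_formula by auto. rewrite phi_none. rewrite Cnorm2_scal.
    replace (Cnorm2 C0) with 0 by (unfold Cnorm2, C0; simpl; ring). rewrite Rmult_0_r; auto.
    intros i Hb. pose proof (fb_find (S (k+n)) (k+n) i Hb). rewrite H0 in E. discriminate.
    pose proof (bb_ge i). unfold inblk in Hb. lia.
Qed.

Lemma phi_dom n : in_Bp p (iterT (Hbreve p m) n phi).
Proof.
  split.
  - apply sq_bps. set (K0 := (p + bb n + n)%nat).
    eapply bps_le.
    2:{ apply bps_plus. apply (bps_trunc (fun k => Cnorm2 (iterT (Hbreve p m) n phi k)) K0).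
        intro; apply Cnorm2_ge0. apply (bps_geom 1). lra. }
    intro k. cbv beta. destruct (Nat.leb k K0) eqn:E.
    + assert (0 <= 1 * (1/2)^k) by (rewrite Rmult_1_l; apply pow_le; lra). lra.
    + apply Nat.leb_gt in E. eapply Rle_trans. apply (tail_val n n k). unfold K0 in E; lia.
      intros i Hb. destruct (Compare_dec.le_lt_dec i n); auto.
      pose proof (bb_mono i n l). pose proof (cc_le i). unfold inblk in Hb. unfold K0 in E. lia.
      apply bb_ge. pose proof (pow_le (1/2) k ltac:(lra)).
      assert ((1/2)^(S n) <= 1) by (apply pow_le1; lra). nra.
  - intros k Hk. destruct n.
    + simpl. apply phi_none. intros i Hb. unfold inblk in Hb. lia.
    + apply iter_low; auto; lia.
Qed.

Lemma part_orbit : dense_in (in_Bp p) (fun x => exists n, forall k, iterT (Hbreve p m) n phi k = x k).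
Proof.
  intros x eps Hx He.
  destruct (tail_small x (eps/8) (proj1 Hx)) as [L HL]. lra.
  set (Lc := S L).
  destruct (pow_lt_1_zero (1/2) ltac:(rewrite Rabs_pos_eq; lra) (eps/16)) as [J HJ]. lra.
  destruct (INR_unbounded (8 * INR Lc / eps)) as [q Hq].
  set (zr := fun s => up (fst (x (p + s)%nat) * INR (S q))).
  set (zi := fun s => up (snd (x (p + s)%nat) * INR (S q))).
  set (f := fun u => match u with O => J | 1 => Lc | 2 => q
     | S (S (S s)) => Cantor.to_nat (Cantor.to_nat (Z.to_nat (zr s), Z.to_nat (- zr s)),
                                      Cantor.to_nat (Z.to_nat (zi s), Z.to_nat (- zi s))) end%nat).
  set (i := enc f (3 + Lc)).
  assert (HiJ : (J <= i)%nat).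
  { replace J with (comp i 0). apply comp_le. unfold i. rewrite comp_enc. auto. lia. }
  assert (Hcc : cc i = Lc) by (unfold cc, i; rewrite comp_enc; auto; lia).
  assert (Hval : forall s, (s < Lc)%nat -> val i s =
     (qv (Z.to_nat (zr s)) (Z.to_nat (- zr s)) q, qv (Z.to_nat (zi s)) (Z.to_nat (- zi s)) q)).
  { intros s Hs. unfold val. cbv zeta.
    replace (comp i 2) with q by (unfold i; rewrite comp_enc; auto; lia).
    replace (comp i (3 + s)) with (f (3 + s)%nat) by (unfold i; rewrite comp_enc; auto; lia).
    change (3 + s)%nat with (S (S (S s))). unfold f. cbv beta iota.
    rewrite !Cantor.cancel_of_to. cbn [fst snd]. rewrite !Cantor.cancel_of_to. auto. }
  set (n := bb i).
  exists (iterT (Hbreve p m) n phi). split. exists n; auto.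
  intro M.
  assert (HQ : 1 <= INR (S q)) by (rewrite S_INR; pose proof (pos_INR q); lra).
  set (c := 2 * / INR (S q)).
  assert (Hc : 0 <= c) by (unfold c; pose proof (Rinv_0_lt_compat (INR (S q)) ltac:(lra)); lra).
  set (Ind := fun j => if Nat.ltb j Lc then c else 0).
  set (Tl := fun k => if Nat.leb k L then 0 else Cnorm2 (x k)).
  set (C := (1/2)^(S i)).
  assert (HC : 0 <= C) by (apply pow_le; lra).
  eapply Rle_trans.
  { apply (sum_Rle _ (fun k => (if Nat.leb p k then Ind (k - p)%nat else 0) + 2 * (C * (1/2)^k) + 2 * Tl k)).
    intros k _.
    assert (0 <= Tl k) by (unfold Tl; destruct (Nat.leb k L); [lra|apply Cnorm2_ge0]).
    assert (0 <= (if Nat.leb p k then Ind (k - p)%nat else 0)).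
    { destruct (Nat.leb p k); [unfold Ind; destruct (Nat.ltb (k-p) Lc)|]; lra. }
    assert (0 <= C * (1/2)^k) by (apply Rmult_le_pos; auto; apply pow_le; lra).
    destruct (Compare_dec.lt_dec k p).
    - rewrite (proj2 (phi_dom n) k l), (proj2 Hx k l). unfold Cnorm2, Csub, C0; simpl. lra.
    - destruct (Compare_dec.lt_dec k (p + Lc)).
      + replace (Nat.leb p k) with true by (symmetry; apply Nat.leb_le; lia).
        unfold Ind. replace (Nat.ltb (k - p) Lc) with true by (symmetry; apply Nat.ltb_lt; lia).
        rewrite iter_formula by lia. rewrite (phi_blk i) by (unfold inblk, n; lia).
        unfold n. replace (k + bb i - bb i)%nat with k by lia.
        replace (k - p)%nat with (k - p)%nat by auto.
        rewrite Cscal_Cscal.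
        pose proof (W_ge1 p m hm (bb i) k ltac:(lia)).
        replace (W p m (bb i) k * / W p m (bb i) k) with 1 by (field; lra).
        rewrite Cscal_1. rewrite Hval by lia.
        replace (x k) with (x (p + (k - p))%nat) by (f_equal; lia).
        destruct (approx (fst (x (p + (k - p))%nat)) q) as [_ A1].
        destruct (approx (snd (x (p + (k - p))%nat)) q) as [_ A2].
        fold (zr (k - p)%nat) in A1. fold (zi (k - p)%nat) in A2.
        unfold Cnorm2, Csub. cbn [fst snd]. unfold c. lra.
      + eapply Rle_trans. apply Cnorm2_sub_le.
        assert (Cnorm2 (iterT (Hbreve p m) n phi k) <= C * (1/2)^k).
        { apply tail_val. lia. 2: unfold n; lia.
          intros i' Hb. unfold inblk in Hb. destruct (Nat.lt_total i i') as [h|[h|h]]; auto.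
          subst i'. lia. pose proof (disj i' i h). unfold n in Hb. lia. }
        unfold Tl. replace (Nat.leb k L) with false by (symmetry; apply Nat.leb_gt; lia).
        lra. }
  rewrite !plus_sum, (sum_scal_l 2 (fun k => C * (1/2)^k)), (sum_scal_l 2 Tl).
  assert (S1 : sum_f_R0 (fun k => if Nat.leb p k then Ind (k - p)%nat else 0) M <= INR Lc * c).
  { eapply Rle_trans. apply (sum_shift_le Ind p). intro; unfold Ind; destruct (Nat.ltb k Lc); lra.
    apply sum_ind; auto. }
  assert (S2 : sum_f_R0 (fun k => C * (1/2)^k) M <= 2 * C) by (apply geom_sum; auto).
  assert (S3 : sum_f_R0 Tl M <= eps / 8) by (apply HL; lia).
  assert (H1 : INR Lc * c <= eps / 4).
  { unfold c. assert (0 < INR (S q)) by lra. rewrite S_INR in *.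
    apply Rmult_le_reg_r with (INR q + 1). lra.
    replace (INR Lc * (2 * / (INR q + 1)) * (INR q + 1)) with (2 * INR Lc) by (field; lra).
    assert (8 * INR Lc / eps * eps = 8 * INR Lc) by (field; lra).
    assert (8 * INR Lc < INR q * eps) by nra. nra. }
  assert (H2 : C <= eps / 16).
  { specialize (HJ J (le_n _)). rewrite Rabs_pos_eq in HJ by (apply pow_le; lra).
    unfold C. pose proof (half_mono J (S i) ltac:(lia)). lra. }
  lra.
Qed.

End Hyp.


Theorem theorem3p5 (p m : nat) (hm : (1 <= m)%nat) :
  chaotic (in_Bp p) (dom_H p m) (Hbreve p m).
Proof.
  split. intros x Hx; apply Hx.
  split. eapply part_dense; eauto.
  split. intros n Hn. eapply part_closed; eauto.
  split.
  - exists (phi p m). split.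
    + intros n Hn. apply dom_pow_of. intros z Hz1 Hz2; split; auto.
      intros i Hi. apply phi_dom; auto.
    + eapply part_orbit; eauto.
  - eapply part_periodic; eauto.
Qed.
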